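(* Let $0\le p_1<1/2<p_2\le 1$ and $c=\min\{1/2-p_1,\,p_2-1/2\}$. Let $n\ge 4$ and $\ell$ be integers with $(1/c^2)\ln n\le \ell\le n$, and let $a\le p_1\ell$, $b\ge p_2\ell$. Then $|\mathcal{W}(n,\ell,[a,b])|\ge 2^{n-1}$.
   Context: $\mathrm{wt}(\mathbf{x})$ denotes the number of ones of a binary sequence $\mathbf{x}$. For $\mathbf{x}=x_1\dots x_n\in\{0,1\}^n$ and $\ell\le n$, the windows of size $\ell$ are $x_i\dots x_{i+\ell-1}$, $1\le i\le n-\ell+1$. For reals $a\le b$, $\mathcal{W}(n,\ell,[a,b])$ is the set of $\mathbf{x}\in\{0,1\}^n$ all of whose windows of size $\ell$ have weight in $[a,b]$. $\ln$ is the natural logarithm. *)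

(* Defs.v *)
From mathcomp Require Import all_boot all_order all_algebra.
From mathcomp Require Import reals exp.
Set Implicit Arguments. Unset Strict Implicit. Unset Printing Implicit Defensive.
Import Order.TTheory GRing.Theory Num.Theory.
Local Open Scope ring_scope.

(* A binary sequence x_1 ... x_n is a finite function 'I_n -> bool
   (0-indexed: x j for j < n). *)

Definition window_wt (n : nat) (x : {ffun 'I_n -> bool}) (i l : nat) : nat :=
  (\sum_(j < n | (i <= j < i + l)%N) (x j : nat))%N.

Definition W (R : realType) (n l : nat) (a b : R) : {set {ffun 'I_n -> bool}} :=
  [set x : {ffun 'I_n -> bool} |
     [forall i : 'I_n.+1, (i + l <= n)%N ==>
        ((a <= (window_wt x i l)%:R) && ((window_wt x i l)%:R <= b))]].

(* Main.v *)
Require Import Defs.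
From mathcomp Require Import all_boot all_order all_algebra.
From mathcomp Require Import reals exp.
From mathcomp Require Import all_classical sequences normedtype topology.
From mathcomp Require Import ring lra zify.
Import Order.TTheory GRing.Theory Num.Theory.
Local Open Scope ring_scope.

Section Cosh.
Variable R : realType.

Lemma coeffN (y : R) k : exp_coeff (- y) k = (-1) ^+ odd k * exp_coeff y k.
Proof. by rewrite /exp_coeff /= (exprNn y) -mulrA signr_odd. Qed.

Lemma sum_even (y : R) m :
  \sum_(0 <= k < m.*2) (exp_coeff y k + exp_coeff (- y) k) =
  \sum_(0 <= j < m) 2 * (y ^+ (j.*2) / (j.*2)`!%:R).
Proof.
elim: m => [|m IH]; first by rewrite !big_geq.
rewrite doubleS !big_nat_recr //= -IH -addrA; congr (_ + _).
rewrite !coeffN /= odd_double /= expr0 expr1 mul1r mulN1r subrr addr0.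
rewrite /exp_coeff /=; ring.
Qed.

Lemma term_ge0 (y : R) k : 0 <= exp_coeff y k + exp_coeff (- y) k.
Proof.
rewrite coeffN; case Ho: (odd k) => /=; first by rewrite expr1 mulN1r subrr.
rewrite expr0 mul1r -mulr2n mulrn_wge0 // /exp_coeff /= divr_ge0 //.
by rewrite exprn_even_ge0 ?Ho.
Qed.

Lemma sum_le_exp (u : R) m : 0 <= u ->
  \sum_(0 <= j < m) u ^+ j / j`!%:R <= expR u.
Proof.
move=> u0.
have := @nondecreasing_cvgn_le R (series (exp_coeff u)).
move=> /(_ _ (is_cvg_series_exp_coeff u) m); apply.
apply: nondecreasing_series => k _ _.
by rewrite /exp_coeff /= divr_ge0 // exprn_ge0.
Qed.


Lemma fact_double j : (2 ^ j * j`! <= (j.*2)`!)%N.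
Proof.
elim: j => [|j IH] //.
rewrite doubleS !factS expnS.
have h1 : (2 * j.+1 <= (j.*2).+2)%N by lia.
have h2 : (1 <= (j.*2).+1)%N by lia.
have := leq_mul h1 (leq_mul h2 IH).
rewrite mul1n => H; apply: leq_trans H; rewrite leq_eqVlt; apply/orP; left; apply/eqP.
nia.
Qed.

Lemma term_cmp (y : R) j :
  y ^+ (j.*2) / (j.*2)`!%:R <= (y ^+ 2 / 2) ^+ j / j`!%:R.
Proof.
have -> : (y ^+ 2 / 2) ^+ j / j`!%:R = (y ^+ 2) ^+ j / (2 ^ j * j`!)%:R.
  by rewrite exprMn exprVn natrM natrX invfM mulrA.
rewrite -exprM mul2n ler_wpM2l ?exprn_even_ge0 ?odd_double //.
rewrite lef_pV2 ?posrE ?ltr0n ?muln_gt0 ?expn_gt0 ?fact_gt0 //.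
by rewrite ler_nat fact_double.
Qed.

Lemma cosh_le (y : R) : expR y + expR (- y) <= 2 * expR (y ^+ 2 / 2).
Proof.
rewrite /expR -lim_seriesD; try exact: is_cvg_series_exp_coeff.
rewrite -/(expR (y ^+ 2 / 2)).
apply: limr_le; first exact: is_cvg_seriesD (is_cvg_series_exp_coeff _) (is_cvg_series_exp_coeff _).
apply: nearW => m /=.
have nd : nondecreasing_seq (series (exp_coeff y + exp_coeff (- y))).
  by apply: nondecreasing_series => k _ _; exact: term_ge0.
apply: (le_trans (nd m m.*2 _)); first by rewrite -addnn leq_addr.
rewrite /series /= sum_even -mulr_sumr ler_wpM2l //.
apply: (le_trans _ (sum_le_exp _ _ _)); last by rewrite divr_ge0 // sqr_ge0.
by apply: ler_sum => j _; exact: term_cmp.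
Qed.
End Cosh.

Definition cnt {n : nat} (s : bool) (i l : nat) (x : {ffun 'I_n -> bool}) : nat :=
  (\sum_(j < n | (i <= j < i + l)%N) (x j == s))%N.

Lemma win_card (n i l : nat) : (i + l <= n)%N ->
  (\sum_(j < n | (i <= j < i + l)%N) 1)%N = l.
Proof.
move=> hn.
rewrite -(big_mkord (fun j => (i <= j < i + l)%N) (fun _ => 1%N)) big_mkcond /=.
rewrite (big_cat_nat _ (n := i + l)) //= [X in (_ + X)%N](eq_big_nat _ _ (F2 := fun _ => 0%N)); last first.
  by move=> j /andP[h1 _]; rewrite ltnNge h1 andbF.
rewrite (big_cat_nat _ (n := i)) ?leq_addr //= [\sum_(0 <= j < i) _](eq_big_nat _ _ (F2 := fun _ => 0%N)); last first.
  by move=> j /andP[_ h1]; rewrite leqNgt h1.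
rewrite [\sum_(i <= j < i + l) _](eq_big_nat _ _ (F2 := fun _ => 1%N)); last first.
  by move=> j ->.
rewrite !sum_nat_const_nat; lia.
Qed.


Lemma base_ineq (R : realType) (c : R) :
  expR (- (4 * c * (1 / 2 + c))) * ((1 + expR (4 * c)) / 2) <= expR (- (2 * c ^+ 2)).
Proof.
have h := @cosh_le R (2 * c).
have e1 : expR (- (4 * c * (1 / 2 + c))) * (1 + expR (4 * c)) =
          expR (- (4 * c ^+ 2)) * (expR (2 * c) + expR (- (2 * c))).
  rewrite [LHS]mulrDr mulr1 [RHS]mulrDr -!expRD [RHS]addrC.
  by congr (expR _ + expR _); field.
have e2 : expR ((2 * c) ^+ 2 / 2) = expR (2 * c ^+ 2).
  by congr expR; field.
rewrite mulrA e1 e2 in h *.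
have e3 : expR (- (2 * c ^+ 2)) = expR (- (4 * c ^+ 2)) * expR (2 * c ^+ 2).
  by rewrite -expRD; congr expR; ring.
rewrite e3 ler_pdivrMr // -mulrA [_ * 2]mulrC ler_wpM2l ?expR_ge0 //.
Qed.

Lemma chernoff (R : realType) (n i l : nat) (s : bool) (c : R) : 0 < c -> (i + l <= n)%N ->
  (#|[set x : {ffun 'I_n -> bool} | (1 / 2 + c) * l%:R < (cnt s i l x)%:R]|%:R : R)
    <= 2 ^+ n * expR (- (2 * c ^+ 2)) ^+ l.
Proof.
move=> c0 hn.
set A := [set x | _].
set E := expR (4 * c).
pose G (j : 'I_n) (b : bool) : R := if (i <= j < i + l)%N && (b == s) then E else 1.
have key x : expR (4 * c * (cnt s i l x)%:R) = \prod_(j < n) G j (x j).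
  rewrite /cnt natr_sum mulr_sumr expR_sum big_mkcond /=.
  apply: eq_bigr => j _; rewrite /G; case: (i <= j < i + l)%N => //=.
  by case: (x j == s); rewrite ?mulr1 ?mulr0 ?expR0.
have sumG : \sum_(x : {ffun 'I_n -> bool}) \prod_(j < n) G j (x j)
            = 2 ^+ n * ((1 + E) / 2) ^+ l.
  rewrite -bigA_distr_bigA /=.
  rewrite (eq_bigr (fun j : 'I_n => 2 * (if (i <= j < i + l)%N then (1 + E)/2 else 1))); last first.
    move=> j _; rewrite big_bool /G /=; case: (i <= j < i + l)%N; case: (s) => /=.
    - by field.
    - by field.
    - by rewrite mulr1.
    - by rewrite mulr1.
  rewrite big_split /= prodr_const card_ord -big_mkcond /= prodr_const.
  by rewrite -sum1_card win_card.
have -> : (#|A|%:R : R) = \sum_(x in A) 1 by rewrite sumr_const.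
set t := (1 / 2 + c) * l%:R.
apply: (@le_trans _ _ (\sum_(x : {ffun 'I_n -> bool}) expR (4 * c * ((cnt s i l x)%:R - t)))).
  rewrite [X in _ <= X](bigID (mem A)) /= ler_wpDr ?sumr_ge0 //; first by move=> x _; exact: expR_ge0.
  apply: ler_sum => x; rewrite inE => hx.
  by rewrite ltW // expR_gt1 mulr_gt0 ?subr_gt0 // mulr_gt0.
rewrite (eq_bigr (fun x => expR (- (4 * c * t)) * expR (4 * c * (cnt s i l x)%:R))); last first.
  by move=> x _; rewrite -expRD; congr expR; ring.
rewrite -mulr_sumr.
under eq_bigr => x _ do rewrite key.
rewrite sumG.
have -> : expR (- (4 * c * t)) = expR (- (4 * c * (1 / 2 + c))) ^+ l.
  by rewrite -expRM_natr /t; congr expR; ring.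
rewrite mulrCA ler_wpM2l ?exprn_ge0 // -exprMn lerXn2r ?nnegrE ?expR_ge0 ?mulr_ge0 ?expR_ge0 ?divr_ge0 ?addr_ge0 ?expR_ge0 //.
  by rewrite invr_ge0.
exact: base_ineq.
Qed.

Lemma wt_cnt n (x : {ffun 'I_n -> bool}) i l : window_wt x i l = cnt true i l x.
Proof. by apply: eq_bigr => j _; case: (x j). Qed.

Lemma cnt_sum n (x : {ffun 'I_n -> bool}) i l : (i + l <= n)%N ->
  (cnt true i l x + cnt false i l x = l)%N.
Proof.
move=> hn; rewrite /cnt -big_split -[RHS](@win_card n i l hn) /=.
by apply: eq_bigr => j _; case: (x j).
Qed.

Lemma card_sum (T : finType) (R : realType) (A : {set T}) :
  (#|A|%:R : R) = \sum_x ((x \in A)%:R : R).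
Proof.
by rewrite -sumr_const big_mkcond; apply: eq_bigr => x _; case: (x \in A).
Qed.

Theorem theorem4 (R : realType) (p1 p2 : R) (n l : nat) (a b : R) :
  0 <= p1 -> p1 < 1 / 2 -> 1 / 2 < p2 -> p2 <= 1 ->
  (4 <= n)%N ->
  (let c := Num.min (1 / 2 - p1) (p2 - 1 / 2) in
   (1 / c ^+ 2) * ln (n%:R : R) <= l%:R) ->
  (l <= n)%N ->
  a <= p1 * l%:R -> p2 * l%:R <= b ->
  (2 ^ n.-1 <= #|W n l a b|)%N.
Proof.
move=> p10 p1h p2h p21 n4 hl hln ha hb.
set c := Num.min (1 / 2 - p1) (p2 - 1 / 2).
have hl2 : (1 / c ^+ 2) * ln (n%:R : R) <= l%:R := hl.
have c1 : c <= 1 / 2 - p1 by rewrite /c ge_min lexx.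
have c2 : c <= p2 - 1 / 2 by rewrite /c ge_min lexx orbT.
have c0 : 0 < c by rewrite /c lt_min !subr_gt0 p1h p2h.
have N4 : (4 : R) <= n%:R by rewrite (ler_nat R 4).
have Npos : (0 : R) < n%:R by lra.
have lnpos : 0 < ln (n%:R : R) by apply: ln_gt0; lra.
have hcl : ln (n%:R : R) <= c ^+ 2 * l%:R.
  have c2p : 0 < c ^+ 2 by rewrite exprn_gt0.
  by rewrite -ler_pdivrMl // -div1r.
have l1 : (1 <= l)%N.
  have hpos : 0 < c ^+ 2 * l%:R by apply: (lt_le_trans lnpos hcl).
  by rewrite pmulr_rgt0 ?exprn_gt0 // ltr0n in hpos.
pose B := expR (- (2 * c ^+ 2)) ^+ l.
have hB : B * (n%:R ^+ 2) <= 1.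
  rewrite /B -expRM_natr.
  have -> : (n%:R : R) ^+ 2 = expR (ln n%:R * 2%:R) by rewrite expRM_natr lnK // posrE.
  rewrite -expRD expR_le1; nra.
have B0 : 0 <= B by rewrite /B exprn_ge0 // expR_ge0.
pose Lo (i : nat) := [set x : {ffun 'I_n -> bool} | (1 / 2 + c) * l%:R < (cnt false i l x)%:R].
pose Hi (i : nat) := [set x : {ffun 'I_n -> bool} | (1 / 2 + c) * l%:R < (cnt true i l x)%:R].
pose f (x : {ffun 'I_n -> bool}) (i : 'I_n.+1) : R := (x \in Lo i)%:R + (x \in Hi i)%:R.
have f0 x i : 0 <= f x i by rewrite /f addr_ge0 ?ler0n.
have bad x : x \in ~: W n l a b -> 1 <= \sum_(i : 'I_n.+1 | (i + l <= n)%N) f x i.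
  rewrite !inE negb_forall => /existsP [i]; rewrite negb_imply => /andP [hi hbad].
  rewrite (bigD1 i) //= -[1]addr0 lerD ?sumr_ge0 // /f.
  move: hbad; rewrite negb_and -!ltNge wt_cnt => /orP [hlo | hhi].
  - have : x \in Lo i.
      rewrite inE.
      have e := @cnt_sum n x i l hi.
      have -> : cnt false i l x = (l - cnt true i l x)%N by move: e; clear; lia.
      rewrite natrB; last by move: e; clear; lia.
      have h1 : p1 * l%:R <= (1 / 2 - c) * l%:R by rewrite ler_wpM2r //; lra.
      move: hlo ha h1; generalize ((cnt true i l x)%:R : R) (l%:R : R) => w L.
      clear -c0; lra.
    by move=> -> /=; rewrite lerDl ler0n.
  - have : x \in Hi i.
      rewrite inE.
      have h1 : (1 / 2 + c) * l%:R <= p2 * l%:R by rewrite ler_wpM2r //; lra.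
      move: hhi hb h1; generalize ((cnt true i l x)%:R : R) (l%:R : R) => w L.
      clear -c0; lra.
    by move=> -> /=; rewrite addrC lerDl ler0n.
have cb : (#|~: W n l a b|%:R : R) <= n%:R * (2 * (2 ^+ n * B)).
  rewrite card_sum.
  apply: (@le_trans _ _ (\sum_(x : {ffun 'I_n -> bool}) \sum_(i : 'I_n.+1 | (i + l <= n)%N) f x i)).
    apply: ler_sum => x _; case hx: (x \in ~: W n l a b) => /=; first exact: bad.
    exact: sumr_ge0.
  rewrite exchange_big /=.
  apply: (@le_trans _ _ (\sum_(i : 'I_n.+1 | (i + l <= n)%N) (2 * (2 ^+ n * B)))).
    apply: ler_sum => i hi; rewrite /f big_split /= -!card_sum.
    apply: (@le_trans _ _ (2 ^+ n * B + 2 ^+ n * B)); first by apply: lerD; apply: chernoff.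
    by rewrite mulr_natl.
  have K0' : (0 : R) <= 2 * (2 ^+ n * B).
    by apply: mulr_ge0 => //; apply: mulr_ge0 => //; exact: exprn_ge0.
  rewrite big_mkcond big_ord_recr /=.
  have -> : (n + l <= n)%N = false by move: l1; clear; lia.
  rewrite addr0 (mulr_natl (2 * (2 ^+ n * B)) n).
  apply: (@le_trans _ _ (\sum_(i < n) (2 * (2 ^+ n * B)))); last by rewrite sumr_const card_ord.
  by apply: ler_sum => i _; case: ifP.
have tot := cardsC (W n l a b).
rewrite card_ffun card_bool card_ord in tot.
have n0 : (0 < n)%N by move: n4; clear; lia.
have e2 : (2 : R) ^+ n = 2 * 2 ^+ n.-1 by rewrite -exprS prednK.
have K0 : (0 : R) <= 2 ^+ n.-1 by rewrite exprn_ge0.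
have hc : (#|~: W n l a b| <= 2 ^ n.-1)%N.
  rewrite -(ler_nat R) natrX; apply: (le_trans cb); rewrite e2.
  have NB : n%:R * B * 4 <= 1.
    apply: le_trans hB.
    have -> : B * n%:R ^+ 2 = n%:R * B * n%:R by rewrite expr2; ring.
    by rewrite ler_wpM2l // mulr_ge0 // ler0n.
  have -> : n%:R * (2 * (2 * 2 ^+ n.-1 * B)) = 2 ^+ n.-1 * (n%:R * B * 4) by ring.
  by rewrite -[X in _ <= X]mulr1 ler_wpM2l.
have e3 : (2 ^ n = 2 * 2 ^ n.-1)%N by rewrite -expnS prednK.
move: tot hc; rewrite e3; clear; lia.
Qed.
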